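(* Let $B \in M_{n_1}\otimes\cdots\otimes M_{n_p}$ (real) and let $P \subseteq \mathcal{P}([p])$ be non-empty. Then \[ \mu_{\min}(B) \ge W^{P,\mathbf{1}}_{\min}(B) \quad\text{and}\quad \mu_{\max}(B) \le W^{P,\mathbf{1}}_{\max}(B). \]
   Context: $M_n$ denotes real $n\times n$ matrices; $M_{n_1}\otimes\cdots\otimes M_{n_p}$ is identified with $M_{n_1\cdots n_p}$ via the Kronecker product. $[p] = \{1,\dots,p\}$ and $\mathcal{P}([p])$ is its power set. For $B = \sum_\ell X_{1,\ell}\otimes\cdots\otimes X_{p,\ell}$, the $j$-th partial transpose $\Gamma_j(B)$ replaces each $X_{j,\ell}$ by $X_{j,\ell}^T$ (a well-defined linear map); for $S\subseteq[p]$, $\Gamma_S$ is the composition of $\Gamma_j$ over $j\in S$ ($\Gamma_\emptyset$ is the identity). $\mu_{\min}(B)$ (resp. $\mu_{\max}(B)$) is the minimum (resp. maximum) of $(\mathbf{v_1}\otimes\cdots\otimes\mathbf{v_p})^T B(\mathbf{v_1}\otimes\cdots\otimes\mathbf{v_p})$ over unit vectors $\mathbf{v_j}\in\mathbb{R}^{n_j}$. The joint numerical range of $A_1,\dots,A_k\in M_N$ is $W(A_1,\dots,A_k) = \{(\mathbf{x}^*A_1\mathbf{x},\dots,\mathbf{x}^*A_k\mathbf{x}) : \mathbf{x}\in\mathbb{C}^N,\|\mathbf{x}\|=1\}$. For $P = \{S_1,\dots,S_k\}$, $W^{P,\mathbf{1}}(B) = \{c\in\mathbb{R} : (c,\dots,c)\in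 W(\Gamma_{S_1}(B),\dots,\Gamma_{S_k}(B))\}$, a nonempty compact set with minimum $W^{P,\mathbf{1}}_{\min}(B)$ and maximum $W^{P,\mathbf{1}}_{\max}(B)$. *)

(* Defs.v *)
From HB Require Import structures.
From mathcomp Require Import all_boot all_order all_algebra.
From mathcomp Require Import complex.
From mathcomp Require Import classical_sets boolp reals.
Set Implicit Arguments. Unset Strict Implicit. Unset Printing Implicit Defensive.
Import Order.TTheory GRing.Theory Num.Theory.
Local Open Scope ring_scope.

(* The space
   M_{n_1} (x) ... (x) M_{n_p} = M_{n_1...n_p} is represented by matrices whose
   rows and columns are indexed by multi-indices: the Kronecker product
   X_1 (x) ... (x) X_p has entry  prod_j X_j (i_j) (k_j)  at ((i_j)_j, (k_j)_j). *)
Definition Idx (p : nat) (n : 'I_p -> nat) := {dffun forall j : 'I_p, 'I_(n j)}.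

Definition tmat (R : Type) (p : nat) (n : 'I_p -> nat) := Idx n -> Idx n -> R.

Definition ptrans (R : Type) (p : nat) (n : 'I_p -> nat) (S : {set 'I_p})
  (B : tmat R n) : tmat R n :=
  fun i k => B [ffun j => if j \in S then k j else i j]
               [ffun j => if j \in S then i j else k j].

Definition tprod (R : pzRingType) (p : nat) (n : 'I_p -> nat)
  (v : forall j : 'I_p, 'I_(n j) -> R) : Idx n -> R :=
  fun i => \prod_(j : 'I_p) v j (i j).

Definition rquad (R : pzRingType) (p : nat) (n : 'I_p -> nat)
  (B : tmat R n) (w : Idx n -> R) : R :=
  \sum_(i : Idx n) \sum_(k : Idx n) w i * B i k * w k.

Definition cquad (R : rcfType) (p : nat) (n : 'I_p -> nat)
  (A : tmat R n) (x : Idx n -> R[i]) : R[i] :=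
  \sum_(i : Idx n) \sum_(k : Idx n) conjc (x i) * ((A i k)%:C)%C * x k.

Definition runit (R : pzRingType) (m : nat) (v : 'I_m -> R) : Prop :=
  \sum_(a : 'I_m) v a ^+ 2 = 1.
Definition cunit (R : rcfType) (p : nat) (n : 'I_p -> nat)
  (x : Idx n -> R[i]) : Prop :=
  \sum_(i : Idx n) conjc (x i) * x i = 1.

Definition prodvals (R : rcfType) (p : nat) (n : 'I_p -> nat) (B : tmat R n)
  : set R :=
  [set c | exists v : forall j : 'I_p, 'I_(n j) -> R,
             (forall j, runit (v j)) /\ c = rquad B (tprod v)].

(* W^{P,1}(B) = { c real : (c,...,c) in W(Gamma_{S_1}(B),...,Gamma_{S_k}(B)) }. *)
Definition WP1 (R : rcfType) (p : nat) (n : 'I_p -> nat)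
  (P : {set {set 'I_p}}) (B : tmat R n) : set R :=
  [set c | exists x : Idx n -> R[i],
             cunit x /\ forall S, S \in P -> cquad (ptrans S B) x = (c%:C)%C].

Definition mu_min (R : realType) p (n : 'I_p -> nat) (B : tmat R n) : R :=
  inf (prodvals B).
Definition mu_max (R : realType) p (n : 'I_p -> nat) (B : tmat R n) : R :=
  sup (prodvals B).
Definition WP1_min (R : realType) p (n : 'I_p -> nat) (P : {set {set 'I_p}})
  (B : tmat R n) : R := inf (WP1 P B).
Definition WP1_max (R : realType) p (n : 'I_p -> nat) (P : {set {set 'I_p}})
  (B : tmat R n) : R := sup (WP1 P B).

(* Main.v *)
Require Import Defs.
From HB Require Import structures.
From mathcomp Require Import all_boot all_order all_algebra.
From mathcomp Require Import complex.
From mathcomp Require Import classical_sets boolp reals.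
From mathcomp Require Import ring lra.
Import Order.TTheory GRing.Theory Num.Theory.
Local Open Scope ring_scope.

Section S1.
Variables (R : comPzRingType) (p : nat) (n : 'I_p -> nat).
Local Notation T := {j : 'I_p & 'I_(n j)}.

Lemma sum_tag (F : forall j, 'I_(n j) -> R) j :
  \sum_(t : T | tag t == j) F (tag t) (tagged t) = \sum_(a : 'I_(n j)) F j a.
Proof.
rewrite (eq_bigl (fun t => t \in @tagged_with _ (fun j => 'I_(n j)) j)) //.
rewrite big_sub /=.
rewrite (reindex (tag_with j)) /=; last by exists (untag_with j) => x _;
  [apply: tag_withK | apply: untag_withK].
by [].
Qed.

Lemma sum_tprod (F : forall j, 'I_(n j) -> R) :
  \sum_(i : Idx n) \prod_j F j (i j) = \prod_j \sum_(a : 'I_(n j)) F j a.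
Proof.
under eq_bigr => j _ do rewrite -(sum_tag F j).
rewrite (bigA_distr_big_dep (fun j (t : T) => tag t == j)
   (fun (_ : 'I_p) (t : T) => F (tag t) (tagged t))).
rewrite (big_sub (family (@tagged_with _ (fun j => 'I_(n j))))) /=.
rewrite (reindex (fun i : Idx n => to_family_tagged_with (fprod_of_dffun i))) /=; last first.
  exists (fun x => dffun_of_fprod (of_family_tagged_with x)) => x _.
    by rewrite to_family_tagged_withK fprod_of_dffunK.
  by rewrite dffun_of_fprodK of_family_tagged_withK.
by apply: eq_bigr => i _; apply: eq_bigr => j _; rewrite ffunE.
Qed.
End S1.
Section S2.
Variables (R : realType) (p : nat) (n : 'I_p -> nat).

Definition mix (S : {set 'I_p}) (i k : Idx n) : Idx n :=
  [ffun j => if j \in S then k j else i j].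

Lemma mixK S i k : mix S (mix S i k) (mix S k i) = i.
Proof. by apply/ffunP => j; rewrite !ffunE; case: (j \in S). Qed.

Lemma tprod_mix (v : forall j, 'I_(n j) -> R) S i k :
  tprod v (mix S i k) * tprod v (mix S k i) = tprod v i * tprod v k.
Proof.
rewrite /tprod -!big_split /=; apply: eq_bigr => j _.
by rewrite !ffunE; case: (j \in S) => //; rewrite mulrC.
Qed.

Lemma rquad_ptrans (v : forall j, 'I_(n j) -> R) S (B : tmat R n) :
  rquad (ptrans S B) (tprod v) = rquad B (tprod v).
Proof.
rewrite /rquad !pair_bigA /=.
pose h (ik : Idx n * Idx n) := (mix S ik.1 ik.2, mix S ik.2 ik.1).
have hK : involutive h by case=> i k; rewrite /h /= !mixK.
rewrite (reindex_inj (inv_inj hK)) /=; apply: eq_bigr => -[i k] _ /=.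
rewrite /ptrans -/(mix S _ _) -/(mix S _ _) !mixK.
by rewrite mulrAC [in RHS]mulrAC tprod_mix.
Qed.
End S2.

Local Open Scope complex_scope.

Lemma cquad_real (R : rcfType) (p : nat) (n : 'I_p -> nat) (A : tmat R n)
  (w : Idx n -> R) :
  cquad A (fun i => (w i)%:C) = (rquad A w)%:C.
Proof.
rewrite /cquad /rquad rmorph_sum; apply: eq_bigr => i _.
rewrite rmorph_sum; apply: eq_bigr => k _.
by rewrite conjc_real !rmorphM.
Qed.

Lemma Re_form (R : rcfType) (x y : R[i]) (r : R) :
  complex.Re (x^* * r%:C * y) = r * (complex.Re x * complex.Re y + complex.Im x * complex.Im y).
Proof. by case: x y => a b [c d] /=; ring. Qed.

Lemma Re_norm2 (R : rcfType) (x : R[i]) :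
  complex.Re (x^* * x) = complex.Re x ^+ 2 + complex.Im x ^+ 2.
Proof. by case: x => a b /=; ring. Qed.

Lemma cunit_real (R : realType) (p : nat) (n : 'I_p -> nat)
  (v : forall j : 'I_p, 'I_(n j) -> R) :
  (forall j, runit (v j)) -> cunit (fun i => (tprod v i)%:C).
Proof.
move=> hv; rewrite /cunit.
under eq_bigr => i _ do rewrite conjc_real -rmorphM.
rewrite -rmorph_sum.
have -> : \sum_(i : Idx n) tprod v i * tprod v i = 1; last by [].
under eq_bigr => i _ do rewrite /tprod -big_split /=.
rewrite (@sum_tprod _ _ _ (fun j a => v j a * v j a)); apply: big1 => j _.
by rewrite -(hv j); apply: eq_bigr => a _; rewrite expr2.
Qed.

Theorem theorem6p1 (R : realType) (p : nat) (n : 'I_p -> nat)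
  (hn : forall j, (0 < n j)%N) (B : tmat R n) (P : {set {set 'I_p}})
  (hP : P != finset.set0) :
  WP1_min P B <= mu_min B /\ mu_max B <= WP1_max P B.
Proof.
have [S0 S0P] := set0Pn _ hP.
pose M := \sum_(i : Idx n) \sum_(k : Idx n) `|ptrans S0 B i k|.
have bnd : forall c, WP1 P B c -> `|c| <= M.
  move=> c [x [xu /(_ S0 S0P) e]].
  have -> : c = complex.Re (cquad (ptrans S0 B) x) by rewrite e.
  have hx : forall i, complex.Re (x i) ^+ 2 + complex.Im (x i) ^+ 2 <= 1.
    move=> i; have := congr1 (@complex.Re R) xu; rewrite raddf_sum /= => h1.
    rewrite -h1 (bigD1 i) //= Re_norm2 lerDl; apply: sumr_ge0 => k _.
    by rewrite Re_norm2 addr_ge0 // sqr_ge0.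
  rewrite /cquad raddf_sum; apply: le_trans (ler_norm_sum _ _ _) _.
  apply: ler_sum => i _; rewrite raddf_sum.
  apply: le_trans (ler_norm_sum _ _ _) _; apply: ler_sum => k _.
  rewrite /= Re_form normrM; apply: ler_piMr => //.
  have h1 := hx i; have h2 := hx k.
  move: h1 h2; set a := complex.Re (x i); set b := complex.Im (x i).
  set c' := complex.Re (x k); set d := complex.Im (x k) => h1 h2.
  have s1 := sqr_ge0 (a + c'); have s2 := sqr_ge0 (b + d).
  have s3 := sqr_ge0 (a - c'); have s4 := sqr_ge0 (b - d).
  rewrite ler_norml; apply/andP; split; nra.
have hlb : has_lbound (WP1 P B).
  exists (- M) => c /bnd; rewrite ler_norml => /andP[] //.
have hub : has_ubound (WP1 P B).
  exists M => c /bnd; rewrite ler_norml => /andP[] //.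
have sub : forall c, prodvals B c -> WP1 P B c.
  move=> c [v [hv ->]]; exists (fun i => (tprod v i)%:C); split.
    exact: cunit_real.
  by move=> S _; rewrite cquad_real rquad_ptrans.
have ne : (prodvals B !=set0)%classic.
  pose v := fun j (a : 'I_(n j)) => if a == Ordinal (hn j) then 1 else 0 : R.
  exists (rquad B (tprod v)); exists v; split => // j.
  rewrite /runit (bigD1 (Ordinal (hn j))) //= /v eqxx big1 ?addr0 ?expr1n //.
  by move=> a /negbTE ->; rewrite expr0n.
split.
  apply: lb_le_inf => // c Hc; exact: (ge_inf hlb (sub _ Hc)).
apply: ge_sup => // c Hc; by move: (ub_le_sup hub) => /ubP; apply; apply: sub.
Qed.
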